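(* Let $g$ be a Möbius transformation of the Riemann sphere with $g(\overline{\mathbb D_1})\subset\mathbb D_1$. Then $g^\top(\overline{\mathbb D_1})\subset\mathbb D_1$.
   Context: $\mathbb D_t=\{z\in\mathbb C:|z|<t\}$. For a Möbius transformation $g(x)=\frac{ax+b}{cx+d}$ ($ad-bc\ne0$), its ''transpose'' is the Möbius transformation $g^\top(x)=\frac{ax+c}{bx+d}$. *)

(* Defs.v *)
From HB Require Import structures.
From mathcomp Require Import all_boot all_order all_algebra.
From mathcomp Require Import complex.
Set Implicit Arguments. Unset Strict Implicit. Unset Printing Implicit Defensive.
Import Order.TTheory GRing.Theory Num.Theory.
Local Open Scope ring_scope.
Local Open Scope complex_scope.

Definition mobius (R : rcfType) (a b c d : R[i]) (z : R[i]) : R[i] :=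
  (a * z + b) / (c * z + d).

Definition is_mobius (R : rcfType) (a b c d : R[i]) : Prop :=
  a * d - b * c != 0.

(* g(closed unit disk) ⊂ open unit disk D_1, as a map of the Riemann sphere:
   every z with |z| <= 1 is sent to a finite point (c z + d <> 0, i.e. not to
   infinity) of modulus < 1. *)
Definition maps_cdisk_into_disk (R : rcfType) (a b c d : R[i]) : Prop :=
  forall z : R[i], `|z| <= 1 ->
    c * z + d != 0 /\ `|mobius a b c d z| < 1.

(* Main.v *)
Require Import Defs.
From mathcomp Require Import all_boot all_order all_algebra.
From mathcomp Require Import complex.
From mathcomp Require Import ring.
Import Order.TTheory GRing.Theory Num.Theory.
Local Open Scope ring_scope.

(* g(x) = (a x + b)/(c x + d); its transpose is g^T(x) = (a x + c)/(b x + d). *)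
Theorem lemma3p8 (R : rcfType) (a b c d : R[i]) :
  is_mobius a b c d ->
  maps_cdisk_into_disk a b c d ->
  maps_cdisk_into_disk a c b d.
Proof.
move=> hdet hP w hw.
have key : `|a * w + c| < `|b * w + d|.
  rewrite real_ltNge ?normr_real //; apply/negP => H.
  have u1nz : a * w + c != 0.
    apply/eqP => E; move: H; rewrite E normr0 normr_le0 => /eqP E2.
    move: hdet; rewrite /is_mobius.
    have -> : a * d - b * c = a * (b * w + d) - b * (a * w + c) by ring.
    rewrite E E2.
    have -> : a * 0 - b * 0 = 0 :> R[i] by ring.
    by rewrite eqxx.
  pose z := - (b * w + d) / (a * w + c).
  have hz : `|z| <= 1.
    rewrite /z normf_div normrN ler_pdivrMr ?normr_gt0 // mul1r //.
  have [hnz hlt] := hP z hz.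
  have E : c * z + d = - w * (a * z + b).
    rewrite /z; field; exact: u1nz.
  have wnz : w != 0.
    apply/eqP => w0; move: hnz; rewrite E w0.
    by rewrite oppr0 mul0r eqxx.
  have vnz : a * z + b != 0.
    apply/eqP => E'; move: hnz; rewrite E E'.
    by rewrite mulr0 eqxx.
  move: hlt; rewrite /mobius E normf_div normrM normrN.
  rewrite ltr_pdivrMr ?mulr_gt0 ?normr_gt0 // mul1r.
  rewrite -[X in X < _]mul1r ltr_pM2r ?normr_gt0 //.
  by move=> /(le_lt_trans hw); rewrite ltxx.
have hu2 : b * w + d != 0.
  by rewrite -normr_gt0; apply: le_lt_trans key; exact: normr_ge0.
split => //.
rewrite /mobius normf_div ltr_pdivrMr; first by rewrite mul1r.
by rewrite normr_gt0.
Qed.
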